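(* (a) Let $T$ be a numerical semigroup with $\alpha$-rectangular Apéry set, and let $d_1,d_2$ be coprime positive integers with $d_1\in T$ not a minimal generator of $T$, $d_2\ge 2$, $d_1\notin\mathrm{Ap}(T)$ and $d_1>d_2\,m(T)$. Then the numerical semigroup $S=d_2T+d_1\mathbb N=\{d_2t+d_1k: t\in T,k\in\mathbb N\}$ has $\alpha$-rectangular Apéry set. (b) Conversely, every numerical semigroup $S\neq\mathbb N$ with $\alpha$-rectangular Apéry set is of the form $S=d_2T+d_1\mathbb N$ for some numerical semigroup $T$ with $\alpha$-rectangular Apéry set and integers $d_1,d_2$ satisfying all the hypotheses in (a).
   Context: A numerical semigroup is a submonoid $S$ of $(\mathbb N,+)$ with finite complement in $\mathbb N$; $g_1<\dots<g_\nu$ is its minimal system of generators, $m(S)=g_1$ its multiplicity, and $\mathrm{Ap}(S)=\{s\in S: s-m(S)\notin S\}$. For $i=2,\dots,\nu$, $\alpha_i=\max\{h\in\mathbb N: hg_i\in\mathrm{Ap}(S)\}$, and $\mathrm{Ap}(S)$ is $\alpha$-rectangular if $\mathrm{Ap}(S)=\{\sum_{i=2}^\nu\lambda_ig_i: 0\le\lambda_i\le\alpha_i\}$. (Under the hypotheses of (a), $S=d_2T+d_1\mathbb N$ is the gluing of $T$ and $\mathbb N$, minimally generated by $d_2$ times the minimal generators of $T$ together with $d_1$.) *)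

(* Defs.v *)
From mathcomp Require Import all_boot.
From Stdlib Require Import ClassicalEpsilon.
Set Implicit Arguments. Unset Strict Implicit. Unset Printing Implicit Defensive.

Definition is_numsg (S : nat -> Prop) : Prop :=
  S 0 /\ (forall a b, S a -> S b -> S (a + b)) /\
  exists c, forall n, c <= n -> S n.

Definition is_mingen (S : nat -> Prop) (g : nat) : Prop :=
  S g /\ 0 < g /\
  ~ (exists a b, 0 < a /\ 0 < b /\ S a /\ S b /\ g = a + b).

Definition mult (S : nat -> Prop) : nat :=
  epsilon (inhabits 0)
    (fun m => 0 < m /\ S m /\ forall n, 0 < n -> S n -> m <= n).

(* Apery set w.r.t. the multiplicity: s in S with s - m(S) not in S
   (for s < m(S), s - m(S) is a negative integer, hence not in S). *)
Definition Ap (S : nat -> Prop) (s : nat) : Prop :=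
  S s /\ ~ (mult S <= s /\ S (s - mult S)).

Definition alpha (S : nat -> Prop) (g : nat) : nat :=
  epsilon (inhabits 0)
    (fun a => Ap S (a * g) /\ forall h, Ap S (h * g) -> h <= a).

Definition mingens_list (S : nat -> Prop) (gs : seq nat) : Prop :=
  uniq gs /\ forall g, g \in gs <-> is_mingen S g.

Definition alpha_rect (S : nat -> Prop) : Prop :=
  exists gs : seq nat, mingens_list S gs /\
    forall x, Ap S x <->
      exists lam : nat -> nat,
        (forall g, g \in gs -> g != mult S -> lam g <= alpha S g) /\
        x = \sum_(g <- gs | g != mult S) lam g * g.

Definition gluing (T : nat -> Prop) (d1 d2 : nat) : nat -> Prop :=
  fun x => exists t k, T t /\ x = d2 * t + d1 * k.

(* Main.v *)
Require Import Defs.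
From mathcomp Require Import all_boot.
From mathcomp Require Import zify.
From Stdlib Require Import ClassicalEpsilon Classical Lia.
Set Implicit Arguments. Unset Strict Implicit. Unset Printing Implicit Defensive.

Lemma least_ex (P : nat -> Prop) : (exists n, P n) -> exists n, P n /\ forall k, P k -> n <= k.
Proof.
case=> n0 Pn0.
suff H : forall N n, n <= N -> P n -> exists n, P n /\ forall k, P k -> n <= k by exact: (H n0 n0).
elim=> [|N IH] n Hn Pn.
  exists n; split=> // k _; lia.
case: (classic (exists k, k < n /\ P k)) => [[k [Hk Pk]]|Hno].
  apply: (IH k) => //; lia.
exists n; split=> // k Pk; case: (leqP n k) => // Hk; exfalso; apply: Hno; by exists k.
Qed.

Lemma greatest_ex (P : nat -> Prop) B : (exists n, P n) -> (forall n, P n -> n <= B) ->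
  exists n, P n /\ forall k, P k -> k <= n.
Proof.
move=> [n0 Pn0] HB.
have [k0 [Qk0 Hmin]] := @least_ex (fun k => forall j, P j -> j <= k) (ex_intro _ B HB).
exists k0; split => //.
apply: NNPP => nP.
have k0pos : 0 < k0.
  case: k0 Qk0 Hmin nP => // Q _ nP; have := Q _ Pn0 => H.
  have E : n0 = 0 by lia. by subst.
have : k0 <= k0.-1.
  apply: Hmin => j Pj; have := Qk0 _ Pj; case: (j =P k0) => [E|NE] H; first by subst.
  lia.
lia.
Qed.

Section General.
Variable S : nat -> Prop.
Hypothesis HS : is_numsg S.

Lemma S0 : S 0. Proof. by case: HS. Qed.
Lemma SD a b : S a -> S b -> S (a + b). Proof. by case: HS => _ [H _]; apply: H. Qed.
Lemma SM k a : S a -> S (k * a).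
Proof. move=> Ha; elim: k => [|k IH]; first by rewrite mul0n; exact: S0. by rewrite mulSn; apply: SD. Qed.
Lemma Scond : exists c, forall n, c <= n -> S n. Proof. by case: HS => _ []. Qed.

Lemma mult_spec : 0 < mult S /\ S (mult S) /\ forall n, 0 < n -> S n -> mult S <= n.
Proof.
rewrite /mult; apply: (epsilon_spec (inhabits 0) (fun m => 0 < m /\ S m /\ forall n, 0 < n -> S n -> m <= n)).
have [c Hc] := Scond.
have [n [[n0 Sn] Hl]] := @least_ex (fun n => 0 < n /\ S n) (ex_intro _ c.+1 (conj (ltn0Sn c) (Hc _ (leqnSn c)))).
exists n; split => //; split => // k k0 Sk; exact: Hl.
Qed.

Lemma mult_gt0 : 0 < mult S. Proof. by case: mult_spec. Qed.
Lemma S_mult : S (mult S). Proof. by case: mult_spec => _ []. Qed.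
Lemma mult_min n : 0 < n -> S n -> mult S <= n. Proof. by case: mult_spec => _ [] _; apply. Qed.

Lemma mult_eq n : 0 < n -> S n -> (forall k, 0 < k -> S k -> n <= k) -> mult S = n.
Proof.
move=> n0 Sn Hn; apply/eqP; rewrite eqn_leq mult_min //= Hn //; [exact: mult_gt0|exact: S_mult].
Qed.

Lemma Ap0 : Ap S 0.
Proof. split; first exact: S0. move=> [H _]; have := mult_gt0; lia. Qed.

Lemma notAp x : S x -> ~ Ap S x -> mult S <= x /\ S (x - mult S).
Proof. by move=> Sx nA; apply: NNPP => H; apply: nA. Qed.

Lemma Ap_dec x : S x -> exists q a, Ap S a /\ x = q * mult S + a.
Proof.
elim: x {-2}x (leqnn x) => [|N IH] x Hx Sx.
  have -> : x = 0 by lia. by exists 0, 0; split; [exact: Ap0|].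
case: (classic (Ap S x)) => [A|nA]; first by exists 0, x.
have [Hm Sm] := notAp Sx nA.
have mp := mult_gt0.
have [q [a [Aa E]]] := IH (x - mult S) ltac:(lia) Sm.
exists q.+1, a; split => //; rewrite mulSn; lia.
Qed.

Lemma Ap_sumL a b : Ap S (a + b) -> S a -> S b -> Ap S a.
Proof.
move=> [_ H] Sa Sb; split => // [[Hm Sam]]; apply: H; split; first lia.
have -> : a + b - mult S = (a - mult S) + b by lia.
exact: SD.
Qed.

Lemma Ap_uniq a b : Ap S a -> Ap S b -> a = b %[mod mult S] -> a = b.
Proof.
wlog le : a b / a <= b.
  move=> W Aa Ab E; case: (leqP a b) => H; first exact: W.
  by symmetry; apply: W => //; lia.
move=> Aa [Sb Hb] E.
have : mult S %| b - a by rewrite -eqn_mod_dvd // E.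
case/dvdnP=> k Ek.
case: k Ek => [|k] Ek; first lia.
exfalso; apply: Hb; split; first lia.
have -> : b - mult S = k * mult S + a by rewrite mulSn in Ek; lia.
apply: SD; [apply: SM; exact: S_mult|by case: Aa].
Qed.

Lemma Ap_bound : exists B, forall x, Ap S x -> x <= B.
Proof.
have [c Hc] := Scond; exists (c + mult S) => x [Sx Hx].
case: (leqP x (c + mult S)) => // H; exfalso; apply: Hx; split; first lia.
apply: Hc; lia.
Qed.

Lemma alpha_spec g : 0 < g -> Ap S (alpha S g * g) /\ forall h, Ap S (h * g) -> h <= alpha S g.
Proof.
move=> g0; rewrite /alpha; apply: (epsilon_spec (inhabits 0) (fun a => Ap S (a * g) /\ forall h, Ap S (h * g) -> h <= a)).
have [B HB] := Ap_bound.
have [a [Aa Ha]] := @greatest_ex (fun h => Ap S (h * g)) B (ex_intro (fun h => Ap S (h * g)) 0 Ap0)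
  (fun h Ah => leq_trans (leq_pmulr h g0) (HB _ Ah)).
by exists a.
Qed.

Lemma alpha_eq g a : 0 < g -> Ap S (a * g) -> (forall h, Ap S (h * g) -> h <= a) -> alpha S g = a.
Proof.
move=> g0 Aa Ha; have [A1 H1] := alpha_spec g0.
apply/eqP; rewrite eqn_leq Ha //= H1 //.
Qed.

End General.

Lemma cop_dvd a b c : coprime a b -> b %| a * c -> b %| c.
Proof. by move=> cab; rewrite Gauss_dvdr // coprime_sym. Qed.

Lemma ndvd_cop a b : coprime a b -> 2 <= b -> ~ b %| a.
Proof.
move=> cab b2 H.
have : b %| gcdn a b by rewrite dvdn_gcd H dvdnn.
move/eqP: cab => ->; rewrite dvdn1; lia.
Qed.

Section PartA.
Variables (T : nat -> Prop) (d1 d2 : nat).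
Hypotheses (HT : is_numsg T) (d1p : 0 < d1) (d2p : 0 < d2) (cop : coprime d1 d2)
  (Td1 : T d1) (nmg : ~ is_mingen T d1) (d2g : 2 <= d2) (nAp : ~ Ap T d1)
  (big : d2 * mult T < d1).

Local Notation S := (gluing T d1 d2).
Local Notation mT := (mult T).

Lemma modlem a k b j : d2 * a + d1 * k = d2 * b + d1 * j -> k < d2 ->
  exists r, j = k + d2 * r /\ a = b + d1 * r.
Proof.
move=> E kl.
case: (leqP k j) => H.
  have : d2 %| d1 * (j - k).
    rewrite mulnBr -eqn_mod_dvd; last by rewrite leq_mul2l H orbT.
    apply/eqP; have : (a * d2 + d1 * k) %% d2 = (b * d2 + d1 * j) %% d2 by rewrite mulnC E mulnC.
    by rewrite !modnMDl => ->.
  move/(cop_dvd cop)/dvdnP => [r Er].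
  exists r; split; first lia.
  have : d2 * a = d2 * (b + d1 * r) by nia.
  by move/eqP; rewrite eqn_pmul2l // => /eqP.
exfalso.
have : d2 %| d1 * (k - j).
  rewrite mulnBr -eqn_mod_dvd; last by rewrite leq_mul2l ltnW // orbT.
  apply/eqP; have : (a * d2 + d1 * k) %% d2 = (b * d2 + d1 * j) %% d2 by rewrite mulnC E mulnC.
  by rewrite !modnMDl => ->.
move/(cop_dvd cop)/(dvdn_leq _); lia.
Qed.

Lemma ndvd : ~ d2 %| d1.
Proof. apply: ndvd_cop => //; by rewrite coprime_sym. Qed.

Lemma gT t : T t -> S (d2 * t). Proof. by move=> Tt; exists t, 0; rewrite muln0 addn0. Qed.
Lemma gd1 : S d1. Proof. exists 0, 1; split; [exact: (S0 HT)|lia]. Qed.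
Lemma gD a b : S a -> S b -> S (a + b).
Proof.
move=> [t [k [Tt ->]]] [t' [k' [Tt' ->]]]; exists (t + t'), (k + k'); split; first exact: (SD HT).
lia.
Qed.

Lemma gl_numsg : is_numsg S.
Proof.
split; first by exists 0, 0; split; [exact: (S0 HT)|lia].
split; first exact: gD.
have [c Hc] := Scond HT.
exists (d2 * c + d1 * d2) => n Hn.
set x := chinese d1 d2 0 n.
have dx : d1 %| x by rewrite /dvdn chinese_modl // mod0n.
set k := (x %/ d1) %% d2.
have kl : k < d2 by rewrite ltn_mod.
have Ek : d1 * k = n %[mod d2].
  rewrite /k modnMmr mulnC divnK // chinese_modr //.
clearbody k.
have nk : d1 * k <= n.
  have : d1 * k <= d1 * d2 by rewrite leq_mul2l ltnW ?orbT.
  lia.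
have : d2 %| n - d1 * k by rewrite -eqn_mod_dvd // Ek.
case/dvdnP => t Et.
exists t, k; split; last lia.
apply: Hc; nia.
Qed.

Lemma mult_gl : mult S = d2 * mT.
Proof.
have mp := mult_gt0 HT.
apply: mult_eq; first exact: gl_numsg.
- by rewrite muln_gt0 d2p.
- apply: gT; exact: (S_mult HT).
move=> k k0 [t [j [Tt Ek]]]; subst k.
case: j k0 => [|j] k0; last by nia.
rewrite muln0 addn0 leq_mul2l; apply/orP; right; apply: (mult_min HT) => //; move: k0; rewrite muln0 addn0 muln_gt0 => /andP [].
by [].

Qed.

Lemma nApd1 : mT <= d1 /\ T (d1 - mT).
Proof. exact: notAp. Qed.

Lemma Ap_gl x : Ap S x <-> exists w k, Ap T w /\ k < d2 /\ x = d2 * w + d1 * k.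
Proof.
split.
  move=> [[t [k [Tt Ex]]] nA].
  set t' := t + d1 * (k %/ d2).
  have Tt' : T t' by apply: (SD HT) => //; rewrite mulnC; apply: (SM HT).
  have [q [w [Aw Ew]]] := Ap_dec HT Tt'.
  case: q Ew => [|q] Ew.
    exists w, (k %% d2); split => //; split; first by rewrite ltn_mod.
    rewrite Ex; have := divn_eq k d2; nia.
  exfalso; apply: nA; rewrite mult_gl; split.
    have := divn_eq k d2; rewrite mulSn in Ew; nia.
  exists (q * mT + w), (k %% d2); split; first by apply: (SD HT) => //; [apply: (SM HT); exact: (S_mult HT)|case: Aw].
  have := divn_eq k d2; rewrite mulSn in Ew; nia.
move=> [w [k [Aw [kl ->]]]].
split.
  exists w, k; split => //; by case: Aw.
rewrite mult_gl => [[Hle [t [j [Tt Ej]]]]].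
have E : d2 * w + d1 * k = d2 * (mT + t) + d1 * j by lia.
have [r [_ Er]] := modlem E kl.
case: Aw => _; apply; split; first lia.
have -> : w - mT = t + d1 * r by lia.
by apply: (SD HT) => //; rewrite mulnC; apply: (SM HT).
Qed.

Lemma alpha_gl_h h : 0 < h -> alpha S (d2 * h) = alpha T h.
Proof.
move=> h0.
have [A1 H1] := alpha_spec HT h0.
apply: alpha_eq; first exact: gl_numsg.
- by rewrite muln_gt0 d2p.
- apply/Ap_gl; exists (alpha T h * h), 0; split => //; split => //; lia.
move=> l /Ap_gl [w [k [Aw [kl Ew]]]].
have E : d2 * w + d1 * k = d2 * (l * h) + d1 * 0 by lia.
have [r [Er Ew']] := modlem E kl.
apply: H1.
have -> : l * h = w by nia.
done.
Qed.

Lemma alpha_gl_d1 : alpha S d1 = d2.-1.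
Proof.
apply: alpha_eq => //; first exact: gl_numsg.
- apply/Ap_gl; exists 0, d2.-1; split; first exact: Ap0.
  split; lia.
move=> l /Ap_gl [w [k [Aw [kl Ew]]]].
have E : d2 * w + d1 * k = d2 * 0 + d1 * l by lia.
have [r [Er Ew']] := modlem E kl.
case: r Er Ew' => [|r] Er Ew'; first lia.
exfalso; case: Aw => _; apply.
have [h1 h2] := nApd1.
split; first nia.
have -> : w - mT = (d1 - mT) + r * d1 by nia.
by apply: (SD HT) => //; apply: (SM HT).
Qed.

Lemma mingen_d1 : is_mingen S d1.
Proof.
split; first exact: gd1. split => //.
move=> [a [b [a0 [b0 [[t [k [Tt Ea]]] [[t' [k' [Tt' Eb]]] E]]]]]].
case: k Ea => [|k] Ea; last by nia.
case: k' Eb => [|k'] Eb; last by nia.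
apply: ndvd; apply/dvdnP; exists (t + t'); lia.
Qed.

Lemma mingen_map h : is_mingen T h -> is_mingen S (d2 * h).
Proof.
move=> [Th [h0 nd]].
split; first exact: gT. split; first by rewrite muln_gt0 d2p.
move=> [a [b [a0 [b0 [[t [k [Tt Ea]]] [[t' [k' [Tt' Eb]]] E]]]]]].
have E2 : d2 * h + d1 * 0 = d2 * (t + t') + d1 * (k + k') by lia.
have [r [Er Eh]] := modlem E2 d2p.
case: r Er Eh => [|r] Er Eh.
  have k0 : k = 0 by lia. have k'0 : k' = 0 by lia.
  apply: nd; exists t, t'; split; first by subst; nia.
  split; first by subst; nia. split => //; split => //; nia.
case: (posnP (t + t' + d1 * r)) => Z.
  apply: nmg; have -> : d1 = h by nia.
  by split.
apply: nd; exists (t + t' + d1 * r), d1; split => //; split => //; split.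
  by apply: (SD HT); [exact: (SD HT)|rewrite mulnC; apply: (SM HT)].
split => //; lia.
Qed.

Lemma mingen_inv g : is_mingen S g -> g = d1 \/ exists h, is_mingen T h /\ g = d2 * h.
Proof.
move=> [[t [k [Tt Eg]]] [g0 nd]].
case: k Eg => [|k] Eg.
  right; exists t; split; last lia.
  split => //; split; first by nia.
  move=> [a [b [a0 [b0 [Ta [Tb E]]]]]]; apply: nd.
  exists (d2 * a), (d2 * b); split; first nia. split; first nia.
  split; first exact: gT. split; first exact: gT. lia.
case: (g =P d1) => [->|ne]; first by left.
exfalso; apply: nd; exists d1, (d2 * t + d1 * k); split => //; split.
  case: (posnP (d2 * t + d1 * k)) => // Z; exfalso; apply: ne; lia.
split; first exact: gd1. split; last lia.
by exists t, k.
Qed.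

Variable gsT : seq nat.
Hypothesis HgsT : mingens_list T gsT.

Definition gsS := [seq d2 * h | h <- gsT] ++ [:: d1].

Lemma mingens_gl : mingens_list S gsS.
Proof.
case: HgsT => uT HT'.
split.
  rewrite cat_uniq map_inj_in_uniq ?uT /=; last first.
    by move=> a b _ _ /eqP; rewrite eqn_pmul2l // => /eqP.
  rewrite orbF andbT; apply/negP => /mapP [h _ Eh]; apply: ndvd; apply/dvdnP; exists h; lia.
move=> g; rewrite mem_cat inE; split.
  case/orP => [/mapP [h /HT' Mh ->]|/eqP ->]; [exact: mingen_map|exact: mingen_d1].
case/mingen_inv => [->|[h [Mh ->]]]; first by rewrite eqxx orbT.
by apply/orP; left; apply/mapP; exists h => //; apply/HT'.
Qed.

Lemma sum_gl (lam : nat -> nat) :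
  \sum_(g <- gsS | g != mult S) lam g * g =
  d2 * \sum_(h <- gsT | h != mT) lam (d2 * h) * h + lam d1 * d1.
Proof.
rewrite mult_gl big_cat big_map /= big_cons big_nil.
have -> : (d1 != d2 * mT) = true by apply/negP => /eqP E; lia.
rewrite addn0 big_distrr /=; congr (_ + _).
apply: eq_big => [h|h _]; first by rewrite eqn_pmul2l.
by rewrite mulnCA.
Qed.

Lemma lam_d2 k (mu : nat -> nat) h : (fun g => if g == d1 then k else mu (g %/ d2)) (d2 * h) = mu h.
Proof.
rewrite /=; case: eqP => [E|_]; last by rewrite mulKn.
exfalso; apply: ndvd; apply/dvdnP; exists h; lia.
Qed.

Hypothesis RT : forall x, Ap T x <-> exists lam : nat -> nat,
        (forall g, g \in gsT -> g != mult T -> lam g <= alpha T g) /\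
        x = \sum_(g <- gsT | g != mult T) lam g * g.

Lemma rect_gl x : Ap S x <-> exists lam : nat -> nat,
        (forall g, g \in gsS -> g != mult S -> lam g <= alpha S g) /\
        x = \sum_(g <- gsS | g != mult S) lam g * g.
Proof.
case: HgsT => uT HT'.
split.
  move/Ap_gl => [w [k [/RT [mu [Bmu Ew]] [kl ->]]]].
  exists (fun g => if g == d1 then k else mu (g %/ d2)); split.
    move=> g; rewrite mem_cat inE => /orP [/mapP [h hin ->]|/eqP ->] ne.
      rewrite lam_d2 alpha_gl_h; last by case: (HT' h) => /(_ hin) [_ []].
      apply: Bmu => //; apply/negP => /eqP E; move: ne; by rewrite mult_gl E eqxx.
    by rewrite eqxx alpha_gl_d1; lia.
  rewrite sum_gl eqxx Ew; congr (d2 * _ + _); last by rewrite mulnC.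
  by apply: eq_bigr => h _; rewrite lam_d2.
move=> [lam [Blam ->]].
rewrite sum_gl; apply/Ap_gl.
exists (\sum_(h <- gsT | h != mT) lam (d2 * h) * h), (lam d1); split.
  apply/RT; exists (fun h => lam (d2 * h)); split => // h hin ne.
  rewrite -alpha_gl_h; last by case: (HT' h) => /(_ hin) [_ []].
  apply: Blam; first by rewrite mem_cat; apply/orP; left; apply/mapP; exists h.
  by rewrite mult_gl eqn_pmul2l.
split; last by rewrite [lam d1 * d1]mulnC.
have : lam d1 <= alpha S d1.
  apply: Blam; first by rewrite mem_cat inE eqxx orbT.
  rewrite mult_gl; apply/negP => /eqP E; lia.
rewrite alpha_gl_d1; lia.
Qed.

End PartA.

Lemma map_traject (f : nat -> nat) y n : map f (traject f y n) = traject f (f y) n.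
Proof. elim: n y => [|n IH] y //=; by rewrite IH. Qed.

Lemma traject_in (O : seq nat) (f : nat -> nat) (x : nat) : x \in O -> (forall z, z \in O -> f z \in O) ->
  forall k, iter k f x \in O.
Proof. move=> xO fO; elim=> [|k IH] //=; exact: fO. Qed.

Lemma find_cycle (O : seq nat) (f : nat -> nat) x : x \in O -> (forall z, z \in O -> f z \in O) ->
  exists C, [/\ uniq C, C != [::], {subset C <= O} & perm_eq (map f C) C].
Proof.
move=> xO fO.
have itO := traject_in xO fO.
have lp : looping f x (size O).
  apply: negbNE; rewrite -looping_uniq; apply/negP => U.
  have sub : {subset traject f x (size O).+1 <= O} by move=> y /trajectP [i _ ->].
  by have := uniq_leq_size U sub; rewrite size_traject ltnn.
have [b [lb bmin]] := @least_ex (fun b => looping f x b) (ex_intro (fun b => looping f x b) _ lp).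
case: b lb bmin => [|b] lb bmin; first by [].
have U : uniq (traject f x b.+1).
  rewrite looping_uniq; apply/negP => lb'; have := bmin _ lb'; lia.
move: lb; rewrite /looping => /trajectP [a ab Ea].
set y := iter a f x.
have Uc : uniq (traject f y (b.+1 - a)).
  have E : traject f x b.+1 = traject f x a ++ traject f y (b.+1 - a).
    by rewrite /y -trajectD subnKC // ltnW.
  by move: U; rewrite E cat_uniq => /and3P [].
have cyc : iter (b.+1 - a) f y = y.
  by rewrite /y -iterD subnK ?(ltnW ab).
exists (traject f y (b.+1 - a)); split => //.
- by rewrite -size_eq0 size_traject; lia.
- by move=> z /trajectP [i _ ->]; rewrite /y -iterD.
rewrite map_traject.
case E : (b.+1 - a) cyc => [|n] cyc; first lia.
have H1 := trajectS f y n.+1.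
have H2 := trajectSr f y n.+1.
rewrite cyc in H2.
have : perm_eq (y :: traject f (f y) n.+1) (y :: traject f y n.+1).
  by rewrite -H1 H2 perm_rcons.
by rewrite perm_cons.
Qed.

Section PartB.
Variables (S : nat -> Prop) (gs : seq nat).
Hypotheses (HS : is_numsg S) (nN : exists n, ~ S n) (Hgs : mingens_list S gs).
Local Notation m := (mult S).
Local Notation al := (alpha S).
Definition phi (lam : nat -> nat) := \sum_(g <- gs | g != m) lam g * g.
Definition box (lam : nat -> nat) := forall g, g \in gs -> g != m -> lam g <= al g.
Hypothesis RS : forall x, Ap S x <-> exists lam, box lam /\ x = phi lam.

Definition O := [seq g <- gs | g != m].

Lemma uniq_gs : uniq gs. Proof. by case: Hgs. Qed.
Lemma mg_gs g : g \in gs -> is_mingen S g. Proof. by case: Hgs => _ H /H. Qed.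
Lemma gs_mg g : is_mingen S g -> g \in gs. Proof. by case: Hgs => _ H /H. Qed.
Lemma inO g : (g \in O) = (g \in gs) && (g != m). Proof. by rewrite mem_filter andbC. Qed.

Lemma O_pos g : g \in O -> 0 < g.
Proof. by rewrite inO => /andP [/mg_gs [_ []]]. Qed.
Lemma O_S g : g \in O -> S g.
Proof. by rewrite inO => /andP [/mg_gs []]. Qed.

Lemma O_gt g : g \in O -> m < g.
Proof.
move=> gO; have := mult_min HS (O_pos gO) (O_S gO).
by move: gO; rewrite inO => /andP [_ /eqP ne]; lia.
Qed.

Lemma O_Ap g : g \in O -> Ap S g.
Proof.
move=> gO; split; first exact: O_S.
move=> [le Sg]; move: gO; rewrite inO => /andP [/mg_gs [_ [_ nd]] ne].
have mp := mult_gt0 HS.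
apply: nd; exists m, (g - m); split => //; split.
  by move/eqP: ne; lia.
split; first exact: (S_mult HS). split => //; lia.
Qed.

Lemma al_pos g : g \in O -> 0 < al g.
Proof.
move=> gO; have [_ H] := alpha_spec HS (O_pos gO).
by apply: H; rewrite mul1n; exact: O_Ap.
Qed.

Lemma phi_Ap lam : box lam -> Ap S (phi lam).
Proof. by move=> B; apply/RS; exists lam. Qed.

Lemma Sdec x : S x -> exists q lam, box lam /\ x = q * m + phi lam.
Proof.
move=> Sx; have [q [a [Aa ->]]] := Ap_dec HS Sx.
have [lam [B ->]] := (RS a).1 Aa.
by exists q, lam.
Qed.

Definition psi i (lam : nat -> nat) := \sum_(g <- O | g != i) lam g * g.

Lemma phi_O lam : phi lam = \sum_(g <- O) lam g * g.
Proof. by rewrite /phi big_filter. Qed.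

Lemma uniq_O : uniq O. Proof. exact: filter_uniq uniq_gs. Qed.

Lemma phi_split i lam : i \in O -> phi lam = lam i * i + psi i lam.
Proof. move=> iO; by rewrite phi_O (bigD1_seq i iO uniq_O). Qed.

Lemma psi_ext i lam lam' : (forall g, g != i -> lam g = lam' g) -> psi i lam = psi i lam'.
Proof. move=> H; apply: eq_bigr => g ne; by rewrite H. Qed.

Definition upd (lam : nat -> nat) i a := fun g => if g == i then a else lam g.

Lemma phi_upd lam i a : i \in O -> phi (upd lam i a) + lam i * i = phi lam + a * i.
Proof.
move=> iO; rewrite !(phi_split _ iO) /upd eqxx.
rewrite (@psi_ext i (fun g => if g == i then a else lam g) lam); first lia.
by move=> g /negbTE ->.
Qed.

Lemma box_upd lam i a : box lam -> a <= al i -> box (upd lam i a).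
Proof. move=> B ai g gin ne; rewrite /upd; case: eqP => [->|_] //; exact: B. Qed.

Lemma phi_add lam lam' : phi (fun g => lam g + lam' g) = phi lam + phi lam'.
Proof. by rewrite /phi -big_split /=; apply: eq_bigr => g _; rewrite mulnDl. Qed.

Lemma sumS (C : seq nat) (F : nat -> nat) : (forall z, z \in C -> S (F z)) -> S (\sum_(z <- C) F z).
Proof.
elim: C => [|z C IH] H; first by rewrite big_nil; exact: (S0 HS).
rewrite big_cons; apply: (SD HS); first by apply: H; rewrite inE eqxx.
by apply: IH => y yC; apply: H; rewrite inE yC orbT.
Qed.


Lemma sum_const (C : seq nat) c : \sum_(z <- C) c = size C * c.
Proof. elim: C => [|z C IH]; by rewrite ?big_nil ?big_cons ?IH ?mulSn. Qed.

Lemma Rel i : i \in O -> exists q lam, box lam /\ (al i).+1 * i = q.+1 * m + phi lam.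
Proof.
move=> iO.
have SX : S ((al i).+1 * i) by apply: (SM HS); exact: O_S.
have nA : ~ Ap S ((al i).+1 * i).
  move=> A; have [_ H] := alpha_spec HS (O_pos iO); have := H _ A; lia.
have [le SXm] := notAp SX nA.
have [q [lam [B E]]] := Sdec SXm.
exists q, lam; split => //; rewrite mulSn; lia.
Qed.

Definition E i l := m + l <= (al i).+1 * i /\ S ((al i).+1 * i - l - m).

Lemma edge_of i l q lam : l \in O -> box lam -> (al i).+1 * i = q.+1 * m + phi lam -> 0 < lam l -> E i l.
Proof.
move=> lO B Eq lp.
have [k Ek] : exists k, lam l = k.+1 by exists (lam l).-1; lia.
have U := phi_upd lam k lO.
have [lg lm] : l \in gs /\ l != m by move: lO; rewrite inO => /andP [].
have Bu : box (upd lam l k) by apply: box_upd => //; have := B l lg lm; lia.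
rewrite Ek mulSn in U.
split; first by rewrite Eq mulSn; lia.
have -> : (al i).+1 * i - l - m = q * m + phi (upd lam l k) by rewrite Eq mulSn; lia.
apply: (SD HS); first by apply: (SM HS); exact: (S_mult HS).
by case: (phi_Ap Bu).
Qed.

Lemma no_cycle (f : nat -> nat) (C : seq nat) : uniq C -> C != [::] -> {subset C <= O} ->
  perm_eq (map f C) C -> (forall z, z \in C -> E (f z) z) -> False.
Proof.
move=> uC nC sC pC EC.
set lamC := fun g => if g \in C then al g else 0.
have BC : box lamC by move=> g _ _; rewrite /lamC; case: (g \in C).
have AX := phi_Ap BC.
have PX : phi lamC = \sum_(z <- C) al z * z.
  rewrite phi_O.
  have -> : \sum_(g <- O) lamC g * g = \sum_(g <- O | g \in C) al g * g.
    rewrite [RHS]big_mkcond; apply: eq_bigr => g _; rewrite /lamC; by case: (g \in C).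
  rewrite -big_filter; apply: perm_big; apply: uniq_perm => //.
    exact: filter_uniq uniq_O.
  move=> g; rewrite mem_filter; case gC: (g \in C) => //=; exact: sC.
have S1 : \sum_(z <- C) (al (f z)).+1 * f z = phi lamC + \sum_(z <- C) z.
  rewrite -(big_map f predT (fun z => (al z).+1 * z)) (perm_big _ pC) PX -big_split /=.
  by apply: eq_bigr => z _; rewrite mulSn addnC.
set t := fun z => (al (f z)).+1 * f z - z - m.
have S2 : \sum_(z <- C) (al (f z)).+1 * f z = \sum_(z <- C) t z + \sum_(z <- C) z + size C * m.
  rewrite -sum_const -!big_split /=; apply: eq_big_seq => z zC.
  have [h _] := EC z zC; rewrite /t; lia.
have St : S (\sum_(z <- C) t z) by apply: sumS => z zC; case: (EC z zC).
have sz : 0 < size C by case: C nC {uC sC pC EC lamC BC AX PX S1 S2 St t}.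
case: AX => _; apply; split; first by nia.
have -> : phi lamC - m = \sum_(z <- C) t z + (size C).-1 * m.
  move: S1 S2 sz; case: (size C) => // n; rewrite mulSn /=; lia.
apply: (SD HS) => //; apply: (SM HS); exact: (S_mult HS).
Qed.

Lemma acyc : O != [::] -> exists j, j \in O /\ forall i, i \in O -> ~ E i j.
Proof.
move=> nO; apply: NNPP => H.
have H' : forall j, j \in O -> exists i, i \in O /\ E i j.
  move=> j jO; apply: NNPP => Hn; apply: H; exists j; split => // i iO Eij; apply: Hn; by exists i.
set f := fun j => epsilon (inhabits 0) (fun i => i \in O /\ E i j).
have fP : forall j, j \in O -> f j \in O /\ E (f j) j.
  move=> j jO; exact: (epsilon_spec (inhabits 0) (fun i => i \in O /\ E i j) (H' j jO)).
have [x0 x0O] : exists x0, x0 \in O.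
  by move: nO; case: O => // x s _; exists x; rewrite mem_head.
have [C [uC nC sC pC]] := @find_cycle O f x0 x0O (fun z zO => (fP z zO).1).
apply: (@no_cycle f C) => // z zC; exact: (fP z (sC z zC)).2.
Qed.

Lemma phi0 : phi (fun _ => 0) = 0.
Proof. by rewrite /phi big1. Qed.

Section Peel.
Variable j : nat.
Hypotheses (jO : j \in O) (noE : forall i, i \in O -> ~ E i j).
Local Notation d2 := (al j).+1.

Lemma jgs : j \in gs. Proof. by move: jO; rewrite inO => /andP []. Qed.
Lemma jm : j != m. Proof. by move: jO; rewrite inO => /andP []. Qed.

Lemma RelJ i : i \in O -> exists q lam, [/\ box lam, lam j = 0 & (al i).+1 * i = q.+1 * m + phi lam].
Proof.
move=> iO; have [q [lam [B Eq]]] := Rel iO.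
exists q, lam; split => //.
case: (posnP (lam j)) => // lp; exfalso; exact: (noE iO (edge_of jO B Eq lp)).
Qed.

Definition V x := exists q lam, [/\ box lam, lam j = 0 & x = q * m + phi lam].

Lemma red lam : lam j = 0 -> V (phi lam).
Proof.
suff H : forall N lam, phi lam <= N -> lam j = 0 -> V (phi lam) by move=> lj; apply: (H (phi lam)).
clear lam.
elim=> [|N IH] lam.
  move=> H0 lj; exists 0, (fun _ => 0); split; [by move=> g _ _|by []|rewrite phi0; lia].
move=> HN lj.
case: (classic (box lam)) => [B|nB]; first by exists 0, lam.
have [i [ig [im li]]] : exists i, i \in gs /\ i != m /\ al i < lam i.
  apply: NNPP => H; apply: nB => g gg gm; case: (leqP (lam g) (al g)) => // lt.
  exfalso; apply: H; by exists g.
have iO : i \in O by rewrite inO ig im.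
have ij : i != j by apply/negP => /eqP E; move: li; rewrite E lj.
have [qi [mu [Bmu muj Ei]]] := RelJ iO.
set a := lam i - (al i).+1.
have U := phi_upd lam a iO.
have Ela : lam i = a + (al i).+1 by rewrite /a; lia.
rewrite Ela mulnDl in U.
set lam' := fun g => upd lam i a g + mu g.
have P' : phi lam' = phi (upd lam i a) + phi mu by rewrite /lam' phi_add.
have mp := mult_gt0 HS.
have lt : phi lam' <= N by rewrite mulSn in Ei; lia.
have l'j : lam' j = 0 by rewrite /lam' /upd eq_sym (negbTE ij) lj muj.
have [q [nu [Bnu nuj Enu]]] := IH lam' lt l'j.
exists (q + qi.+1), nu; split => //.
rewrite mulSn in Ei; rewrite mulnDl mulSn; lia.
Qed.

Lemma V0 : V 0. Proof. by rewrite -phi0; apply: red. Qed.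
Lemma VS x : V x -> S x.
Proof.
move=> [q [lam [B _ ->]]]; apply: (SD HS); first by apply: (SM HS); exact: (S_mult HS).
by case: (phi_Ap B).
Qed.
Lemma Vadd x y : V x -> V y -> V (x + y).
Proof.
move=> [q [lam [B lj ->]]] [q' [lam' [B' lj' ->]]].
have [q2 [nu [Bn nj En]]] := red (lam := fun g => lam g + lam' g) ltac:(by rewrite /= lj lj').
exists (q + q' + q2), nu; split => //; rewrite phi_add in En; rewrite !mulnDl; lia.
Qed.
Lemma Vmul k x : V x -> V (k * x).
Proof. move=> Vx; elim: k => [|k IH]; first by rewrite mul0n; exact: V0. by rewrite mulSn; apply: Vadd. Qed.
Lemma Vm : V m.
Proof. exists 1, (fun _ => 0); split; [by move=> g _ _|by []|rewrite phi0; lia]. Qed.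
Lemma VO i : i \in O -> i != j -> V i.
Proof.
move=> iO ij.
have U := phi_upd (fun _ => 0) 1 iO.
rewrite phi0 mul1n mul0n addn0 add0n /= in U.
rewrite -U; apply: red; by rewrite /upd eq_sym (negbTE ij).
Qed.
Lemma Vd2j : V (d2 * j).
Proof. have [q [lam [B lj Eq]]] := RelJ jO. by exists q.+1, lam. Qed.

Lemma Apj l : l <= al j -> Ap S (l * j).
Proof.
move=> ll; have [A _] := alpha_spec HS (O_pos jO).
apply: (Ap_sumL HS (b := (al j - l) * j)).
- by rewrite -mulnDl subnKC.
- apply: (SM HS); exact: O_S.
- apply: (SM HS); exact: O_S.
Qed.

Lemma Ulem l v : 0 < l -> l < d2 -> V v -> l * j = v %[mod m] -> False.
Proof.
move=> l0 ld [q [mu [B muj ->]]] Em.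
have E1 : l * j = phi mu.
  apply: (Ap_uniq HS); [apply: Apj; lia|exact: phi_Ap|].
  by rewrite Em modnMDl.
have U := phi_upd mu (al j - l).+1 jO.
rewrite muj mul0n addn0 -E1 in U.
have Bu : box (upd mu j (al j - l).+1) by apply: (box_upd B); lia.
have A := phi_Ap Bu.
have [_ H] := alpha_spec HS (O_pos jO).
have : (al j).+1 <= al j; last lia.
apply: H.
have -> : (al j).+1 * j = phi (upd mu j (al j - l).+1) by rewrite U -mulnDl; congr (_ * j); lia.
exact: A.
Qed.

Lemma Sdec2 x : S x -> exists l v, [/\ l <= al j, V v & x = l * j + v].
Proof.
move=> Sx; have [q [lam [B ->]]] := Sdec Sx.
exists (lam j), (q * m + phi (upd lam j 0)); split.
- exact: B jgs jm.
- exists q, (upd lam j 0); split => //; first by apply: box_upd.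
  by rewrite /upd eqxx.
have U := phi_upd lam 0 jO; rewrite mul0n addn0 in U; lia.
Qed.

Lemma every_mod n : exists l v, [/\ l <= al j, V v & n = l * j + v %[mod m]].
Proof.
have [c Hc] := Scond HS.
have mp := mult_gt0 HS.
have cle : c <= c * m + n by have := leq_pmulr c mp; lia.
have [l [v [ll Vv E]]] := Sdec2 (Hc (c * m + n) cle).
exists l, v; split => //; by rewrite -E modnMDl.
Qed.

Lemma Vd2mod : exists v1, V v1 /\ d2 = v1 %[mod m].
Proof.
have [l [v [ll Vv E]]] := every_mod 1.
exists (l * (d2 * j) + d2 * v); split.
  apply: Vadd; [apply: Vmul; exact: Vd2j|exact: Vmul].
rewrite -{1}(muln1 d2) -modnMmr E modnMmr; congr (_ %% _); lia.
Qed.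

Lemma Vdiv x : V x -> d2 %| x.
Proof.
move=> Vx; have [v1 [Vv1 E1]] := Vd2mod.
have Ex := divn_eq x d2.
have rl := ltn_mod x d2.
move: (x %/ d2) (x %% d2) Ex rl => q r Ex rl.
have mp := mult_gt0 HS.
have [k Ek] : exists k, m = k.+1 by exists m.-1; lia.
set v2 := x + q * k * v1.
have Er : r = v2 %[mod m].
  rewrite /v2 -modnDmr -modnMmr -E1 modnMmr modnDmr.
  have -> : x + q * k * d2 = (q * d2) * m + r.
    by rewrite Ex Ek (mulnS (q * d2) k) (mulnAC q k d2) addnAC.
  by rewrite modnMDl.
have Vv2 : V (v2 * j) by rewrite mulnC; apply: Vmul; apply: Vadd => //; exact: Vmul.
case: (posnP r) => [r0|rp].
  by apply/dvdnP; exists q; rewrite Ex r0 addn0.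
exfalso; apply: (Ulem rp rl Vv2).
by rewrite -modnMml Er modnMml.
Qed.

Lemma d2m : d2 %| m. Proof. exact: Vdiv Vm. Qed.
Lemma d2g : 2 <= d2. Proof. have := al_pos jO; lia. Qed.

Lemma cop_j : coprime j d2.
Proof.
have [l [v [ll Vv E]]] := every_mod 1.
have E2 : 1 %% d2 = (l * j + v) %% d2 by rewrite -(modn_dvdm 1 d2m) -(modn_dvdm (l * j + v) d2m) E.
have dv := Vdiv Vv.
move: E2; rewrite -modnDmr.
have -> : v %% d2 = 0 by apply/eqP.
rewrite addn0 modn_small; last exact: d2g.
move=> E3.
have Ediv := divn_eq (l * j) d2; rewrite -E3 in Ediv.
rewrite /coprime; apply/eqP; apply/eqP; rewrite -dvdn1.
have g1 : gcdn j d2 %| l * j by apply: dvdn_mull; exact: dvdn_gcdl.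
have g2 : gcdn j d2 %| (l * j) %/ d2 * d2 by apply: dvdn_mull; exact: dvdn_gcdr.
by move: g1; rewrite {1}Ediv (dvdn_addr 1 g2).
Qed.

Definition Tj := fun t => S (d2 * t).
Definition m' := m %/ d2.
Lemma Em : m = d2 * m'. Proof. by rewrite /m' mulnC divnK // d2m. Qed.
Lemma d2p : 0 < d2. Proof. by []. Qed.

Lemma T_numsg : is_numsg Tj.
Proof.
split; first by rewrite /Tj muln0; exact: (S0 HS).
split; first by move=> a b Ta Tb; rewrite /Tj mulnDr; exact: (SD HS).
have [c Hc] := Scond HS; exists c => n cn; apply: Hc.
exact: leq_trans cn (leq_pmull _ d2p).
Qed.

Lemma m'p : 0 < m'.
Proof. by have := mult_gt0 HS; rewrite Em muln_gt0 => /andP [_ H]. Qed.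

Lemma multT : mult Tj = m'.
Proof.
apply: (mult_eq T_numsg); first exact: m'p.
- by rewrite /Tj -Em; exact: (S_mult HS).
move=> k k0 Tk; have := mult_min HS (n := d2 * k) ltac:(by rewrite muln_gt0 k0) Tk.
by rewrite Em leq_mul2l.
Qed.

Lemma gs_dvd g : g \in gs -> g != j -> d2 %| g.
Proof.
move=> gg gj; case: (g =P m) => [->|ne]; first exact: d2m.
by apply: Vdiv; apply: VO => //; rewrite inO gg; apply/eqP.
Qed.

Lemma S_dvd_V x : S x -> d2 %| x -> V x.
Proof.
move=> Sx dx; have [l [v [ll Vv Ex]]] := Sdec2 Sx.
have dv := Vdiv Vv.
move: dx; rewrite Ex (dvdn_addl _ dv) Gauss_dvdl; last by rewrite coprime_sym cop_j.
case: (posnP l) => [->|lp]; first by rewrite mul0n add0n.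
move/(dvdn_leq lp); lia.
Qed.

Lemma SdJ : S (d2 * j - m).
Proof.
have [q [lam [B lj Eq]]] := RelJ jO.
have -> : d2 * j - m = q * m + phi lam by rewrite Eq mulSn; lia.
apply: (SD HS); [apply: (SM HS); exact: (S_mult HS)|by case: (phi_Ap B)].
Qed.

Lemma notmgT : ~ is_mingen Tj j.
Proof.
move=> [_ [_ nd]]; apply: nd.
have mj := O_gt jO.
have m'm : m' <= m by rewrite Em leq_pmull.
exists m', (j - m'); split; first exact: m'p.
split; first lia.
split; first by rewrite /Tj -Em; exact: (S_mult HS).
split; last lia.
by rewrite /Tj mulnBr -Em; exact: SdJ.
Qed.

Lemma ApT t : Ap Tj t <-> Ap S (d2 * t).
Proof.
rewrite /Ap multT /Tj mulnBr -Em; split; move=> [H1 H2]; split => // [[H3 H4]]; apply: H2; split => //.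
  by rewrite Em leq_mul2l in H3.
by rewrite Em leq_mul2l.
Qed.

Lemma d2div a h : d2 %| h -> d2 * (a * (h %/ d2)) = a * h.
Proof. by move=> dh; rewrite mulnCA [d2 * _]mulnC divnK. Qed.

Lemma alphaT h : h \in gs -> h != j -> h != m -> alpha Tj (h %/ d2) = al h.
Proof.
move=> hg hj hm; have dh := gs_dvd hg hj.
have hO : h \in O by rewrite inO hg hm.
have hp : 0 < h %/ d2 by rewrite divn_gt0 // dvdn_leq // O_pos.
apply: (alpha_eq T_numsg hp).
  apply/ApT; rewrite d2div //; exact: (alpha_spec HS (O_pos hO)).1.
move=> l /ApT; rewrite d2div // => A; exact: (alpha_spec HS (O_pos hO)).2.
Qed.

Definition gsT := [seq g %/ d2 | g <- [seq g <- gs | g != j]].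

Lemma mgT_fwd h : h \in gs -> h != j -> is_mingen Tj (h %/ d2).
Proof.
move=> hg hj; have dh := gs_dvd hg hj.
have [Sh [hp nd]] := mg_gs hg.
split; first by rewrite /Tj mulnC divnK.
split; first by rewrite divn_gt0 // dvdn_leq.
move=> [a [b [a0 [b0 [Ta [Tb E]]]]]]; apply: nd.
exists (d2 * a), (d2 * b); split; first by rewrite muln_gt0 a0.
split; first by rewrite muln_gt0 b0.
split => //; split => //.
by rewrite -mulnDr -E mulnC divnK.
Qed.

Lemma mgS_of_T g : is_mingen Tj g -> is_mingen S (d2 * g).
Proof.
move=> [Tg [gp nd]].
split => //; split; first by rewrite muln_gt0 gp.
move=> [a [b [a0 [b0 [Sa [Sb E]]]]]].
have [la [va [lal Vva Ea]]] := Sdec2 Sa.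
have [lb [vb [lbl Vvb Eb]]] := Sdec2 Sb.
have dva := Vdiv Vva; have dvb := Vdiv Vvb.
have dl : d2 %| la + lb.
  have : d2 %| (la + lb) * j + (va + vb).
    have -> : (la + lb) * j + (va + vb) = d2 * g by rewrite mulnDl E Ea Eb; lia.
    exact: dvdn_mulr.
  rewrite (dvdn_addl _ (dvdn_add dva dvb)) Gauss_dvdl //; by rewrite coprime_sym cop_j.
case/dvdnP: dl => r Er.
have r1 : r <= 1 by move: Er; nia.
have [r0|r1'] : r = 0 \/ r = 1 by lia.
  have la0 : la = 0 by lia. have lb0 : lb = 0 by lia.
  apply: nd; exists (a %/ d2), (b %/ d2).
  have da : d2 %| a by rewrite Ea la0 mul0n add0n.
  have db : d2 %| b by rewrite Eb lb0 mul0n add0n.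
  split; first by rewrite divn_gt0 // dvdn_leq.
  split; first by rewrite divn_gt0 // dvdn_leq.
  split; first by rewrite /Tj mulnC divnK.
  split; first by rewrite /Tj mulnC divnK.
  apply/eqP; rewrite -(eqn_pmul2l d2p) mulnDr !(mulnC d2 (_ %/ d2)) !divnK // E; done.
have Eg : d2 * g = (va + vb) + d2 * j by rewrite E Ea Eb; move: Er; rewrite r1' mul1n; nia.
have dvv : d2 %| va + vb := dvdn_add dva dvb.
case: (posnP (va + vb)) => [z|vp].
  apply: notmgT; have -> : j = g.
    apply/eqP; rewrite -(eqn_pmul2l d2p) Eg z add0n; done.
  by split.
apply: nd; exists ((va + vb) %/ d2), j; split; first by rewrite divn_gt0 // dvdn_leq.
split; first exact: O_pos.
split; first by rewrite /Tj mulnC divnK //; apply: (SD HS); exact: VS.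
split; first by rewrite /Tj; case: (RelJ jO) => q [lam [B _ ->]]; apply: (SD HS);
  [apply: (SM HS); exact: (S_mult HS)|case: (phi_Ap B)].
apply/eqP; rewrite -(eqn_pmul2l d2p) Eg mulnDr [d2 * (_ %/ _)]mulnC divnK //.
Qed.

Lemma mingensT : mingens_list Tj gsT.
Proof.
split.
  rewrite map_inj_in_uniq; first exact: filter_uniq uniq_gs.
  move=> a b; rewrite !mem_filter => /andP [aj ag] /andP [bj bg] E.
  by rewrite -(divnK (gs_dvd ag aj)) E divnK // gs_dvd.
move=> g; split.
  move/mapP => [h]; rewrite mem_filter => /andP [hj hg] ->; exact: mgT_fwd.
move=> Mg; have := gs_mg (mgS_of_T Mg) => dg.
apply/mapP; exists (d2 * g); last by rewrite mulKn.
rewrite mem_filter dg andbT; apply/eqP => E.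
have cp := cop_j; rewrite -{1}E in cp.
have : d2 %| gcdn (d2 * g) d2 by rewrite dvdn_gcd dvdn_mulr // dvdnn.
move/eqP: cp => ->; rewrite dvdn1; have := d2g; lia.
Qed.

Lemma sumT (F : nat -> nat) :
  \sum_(g <- gsT | g != m') F g * g = \sum_(h <- gs | (h != j) && (h != m)) F (h %/ d2) * (h %/ d2).
Proof.
rewrite big_map big_filter_cond big_seq_cond [RHS]big_seq_cond; apply: eq_bigl => h.
case hg: (h \in gs) => //=; case hj: (h != j) => //=.
have dh := gs_dvd hg hj.
by rewrite Em -{2}(divnK dh) mulnC eqn_pmul2l.
Qed.

Lemma sumT2 (F : nat -> nat) :
  d2 * \sum_(h <- gs | (h != j) && (h != m)) F (h %/ d2) * (h %/ d2) =
  \sum_(h <- gs | (h != j) && (h != m)) F (h %/ d2) * h.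
Proof.
rewrite big_distrr /= big_seq_cond [RHS]big_seq_cond; apply: eq_bigr => h /andP [hg /andP [hj _]].
by rewrite d2div // gs_dvd.
Qed.

Lemma phi_j lam : lam j = 0 -> phi lam = \sum_(h <- gs | (h != j) && (h != m)) lam h * h.
Proof.
move=> lj.
have -> : \sum_(h <- gs | (h != j) && (h != m)) lam h * h = \sum_(h <- gs | (h != m) && (h != j)) lam h * h.
  by apply: eq_bigl => h; rewrite andbC.
rewrite /phi big_mkcondr /=; apply: eq_bigr => h _; case: (h =P j) => // ->; by rewrite lj.
Qed.

Lemma rectT x : Ap Tj x <-> exists lam : nat -> nat,
        (forall g, g \in gsT -> g != mult Tj -> lam g <= alpha Tj g) /\
        x = \sum_(g <- gsT | g != mult Tj) lam g * g.
Proof.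
rewrite multT; split.
  move/ApT/RS => [lam [B E]].
  have lj : lam j = 0.
    have dpsi : d2 %| psi j lam.
      rewrite /psi big_seq_cond; apply: dvdn_sum => g /andP [gO gj].
      apply: dvdn_mull; apply: Vdiv; exact: VO.
    have : d2 %| lam j * j.
      by rewrite -(dvdn_addl _ dpsi) -phi_split // -E dvdn_mulr.
    rewrite Gauss_dvdl; last by rewrite coprime_sym cop_j.
    have := B j jgs jm; case: (posnP (lam j)) => // lp ll /(dvdn_leq lp); lia.
  exists (fun g => lam (d2 * g)); split.
    move=> g /mapP [h]; rewrite mem_filter => /andP [hj hg] -> ne.
    have dh := gs_dvd hg hj.
    have hm : h != m by apply/eqP => E'; move: ne; rewrite E' /m' eqxx.
    rewrite [d2 * _]mulnC divnK // alphaT //; exact: B.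
  apply/eqP; rewrite -(eqn_pmul2l d2p) E (sumT (fun g => lam (d2 * g))) (sumT2 (fun g => lam (d2 * g))) phi_j //.
  apply/eqP; rewrite big_seq_cond [RHS]big_seq_cond; apply: eq_bigr => h /andP [hg /andP [hj _]].
  by rewrite /= [d2 * _]mulnC divnK // gs_dvd.
move=> [lamT [BT Ex]].
apply/ApT/RS.
exists (fun h => if h == j then 0 else lamT (h %/ d2)); split.
  move=> g gg gm /=; case: (g =P j) => [//|/eqP gj].
  rewrite -(alphaT gg gj gm); apply: BT; first by apply: map_f; rewrite mem_filter gj.
  apply/eqP => E'; move/eqP: gm; apply.
  by rewrite -(divnK (gs_dvd gg gj)) E' mulnC -Em.
rewrite Ex sumT sumT2 phi_j ?eqxx //.
rewrite big_seq_cond [RHS]big_seq_cond; apply: eq_bigr => h /andP [hg /andP [hj _]].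
by rewrite (negbTE hj).
Qed.

Lemma S_glue x : S x <-> gluing Tj j d2 x.
Proof.
split.
  move=> Sx; have [l [v [ll Vv Ex]]] := Sdec2 Sx.
  have dv := Vdiv Vv.
  exists (v %/ d2), l; split; first by rewrite /Tj mulnC divnK //; exact: VS.
  by rewrite [d2 * _]mulnC divnK // Ex addnC mulnC.
move=> [t [k [Tt ->]]]; apply: (SD HS); [exact: Tt|rewrite mulnC; apply: (SM HS); exact: O_S].
Qed.

End Peel.

Lemma O_ne : O != [::].
Proof.
apply/negP => /eqP O0.
have P0 : forall lam, phi lam = 0 by move=> lam; rewrite phi_O O0 big_nil.
have [c Hc] := Scond HS.
have [q [lam [_ Ec]]] := Sdec (Hc c (leqnn c)).
have [q' [lam' [_ Ec']]] := Sdec (Hc c.+1 (leqnSn c)).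
rewrite P0 addn0 in Ec; rewrite P0 addn0 in Ec'.
have m1 : m = 1.
  have mp := mult_gt0 HS.
  have : m %| 1.
    have -> : 1 = (q' - q) * m by rewrite mulnBl -Ec -Ec'; lia.
    exact: dvdn_mull.
  by rewrite dvdn1 => /eqP.
case: nN => n; apply; rewrite -(muln1 n) -m1; apply: (SM HS); exact: (S_mult HS).
Qed.

Lemma partB_ex : exists (T : nat -> Prop) (d1 d2 : nat),
        is_numsg T /\ alpha_rect T /\
        0 < d1 /\ 0 < d2 /\ coprime d1 d2 /\
        T d1 /\ ~ is_mingen T d1 /\ 2 <= d2 /\ ~ Ap T d1 /\
        d2 * mult T < d1 /\
        (forall x, S x <-> gluing T d1 d2 x).
Proof.
have [j [jO noE]] := acyc O_ne.
exists (Tj j), j, (al j).+1.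
split; first exact: T_numsg.
split; first by exists (gsT j); split; [exact: mingensT|exact: rectT].
split; first exact: O_pos.
split => //.
split; first exact: cop_j.
split; first by rewrite /Tj; apply: (SM HS); exact: O_S.
split; first exact: notmgT.
split; first exact: d2g.
split.
  move/(ApT jO noE) => A; have [_ H] := alpha_spec HS (O_pos jO); have := H _ A; lia.
split; last exact: S_glue.
rewrite (multT jO noE) -(Em jO noE); exact: O_gt.
Qed.

End PartB.

Theorem mainTheorem10 :
  (* (a) *)
  (forall (T : nat -> Prop) (d1 d2 : nat),
      is_numsg T -> alpha_rect T ->
      0 < d1 -> 0 < d2 -> coprime d1 d2 ->
      T d1 -> ~ is_mingen T d1 -> 2 <= d2 -> ~ Ap T d1 ->
      d2 * mult T < d1 ->
      is_numsg (gluing T d1 d2) /\ alpha_rect (gluing T d1 d2))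
  /\
  (* (b) *)
  (forall S : nat -> Prop,
      is_numsg S -> (exists n, ~ S n) -> alpha_rect S ->
      exists (T : nat -> Prop) (d1 d2 : nat),
        is_numsg T /\ alpha_rect T /\
        0 < d1 /\ 0 < d2 /\ coprime d1 d2 /\
        T d1 /\ ~ is_mingen T d1 /\ 2 <= d2 /\ ~ Ap T d1 /\
        d2 * mult T < d1 /\
        (forall x, S x <-> gluing T d1 d2 x)).
Proof.
split.
  move=> T d1 d2 HT [gs0 [Hgs0 R0]] d1p d2p cop Td1 nmg d2g nAp big.
  split; first exact: (gl_numsg HT d1p d2p cop d2g big).
  exists (gsS d1 d2 gs0); split.
    exact: (mingens_gl HT d1p d2p cop Td1 nmg d2g big Hgs0).
  exact: (rect_gl HT d1p d2p cop Td1 d2g nAp big Hgs0 R0).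
move=> S HS nN [gs [Hgs RS]].
exact: (partB_ex HS nN Hgs RS).
Qed.
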